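(* Let $R$ be a commutative Noetherian ring and $n$ a non-negative integer. The class of $R$-modules that are in dimension $<n$ is a Serre subcategory of the category of $R$-modules, i.e. it is closed under taking submodules, quotients and extensions.
   Context: For an $R$-module $L$, $\dim\operatorname{Supp}L=\sup\{\dim R/\mathfrak p:\mathfrak p\in\operatorname{Supp}L\}$, the zero module having dimension $-\infty$. An $R$-module $L$ is ''in dimension $<n$'' if there is a finitely generated submodule $N\subseteq L$ with $\dim\operatorname{Supp}(L/N)<n$. *)

(* Defs.v *)
From HB Require Import structures.
From mathcomp Require Import all_boot all_order all_algebra.
Set Implicit Arguments. Unset Strict Implicit. Unset Printing Implicit Defensive.
Import GRing.Theory.
Local Open Scope ring_scope.

Definition ideal_span (R : comPzRingType) (s : seq R) : R -> Prop :=
  fun x => exists c : 'I_(size s) -> R, x = \sum_(i < size s) c i * s`_(val i).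

Definition is_ideal (R : comPzRingType) (I : R -> Prop) : Prop :=
  [/\ I 0, (forall x y, I x -> I y -> I (x + y)) & (forall r x, I x -> I (r * x))].

Definition noetherian_ring (R : comPzRingType) : Prop :=
  forall I : R -> Prop, is_ideal I ->
    exists s : seq R, forall x, I x <-> ideal_span s x.

Definition is_prime_ideal (R : comPzRingType) (P : R -> Prop) : Prop :=
  [/\ is_ideal P, ~ P 1 & (forall x y, P (x * y) -> P x \/ P y)].

Definition strict_subset (R : comPzRingType) (P Q : R -> Prop) : Prop :=
  (forall x, P x -> Q x) /\ exists x, Q x /\ ~ P x.

(* dim R/p >= k : there is a chain of primes p = q_0 ⊊ q_1 ⊊ ... ⊊ q_k. *)
Definition dim_quot_ge (R : comPzRingType) (p : R -> Prop) (k : nat) : Prop :=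
  exists q : nat -> (R -> Prop),
    (forall x, q 0%N x <-> p x) /\
    (forall i, (i <= k)%N -> is_prime_ideal (q i)) /\
    (forall i, (i < k)%N -> strict_subset (q i) (q i.+1)).

Definition mod_span (R : comPzRingType) (M : lmodType R) (s : seq M) : M -> Prop :=
  fun x => exists c : 'I_(size s) -> R, x = \sum_(i < size s) c i *: s`_(val i).

(* p ∈ Supp (M/N), with N = span s:  (M/N)_p <> 0, i.e. some x + N has nonzero
   image in the localization: for every t ∉ p, t x ∉ N. *)
Definition in_supp_quot (R : comPzRingType) (M : lmodType R) (s : seq M)
    (p : R -> Prop) : Prop :=
  exists x : M, forall t : R, ~ p t -> ~ mod_span s (t *: x).

(* M is in dimension < n : there is a finitely generated submodule N ⊆ M with
   dim Supp (M/N) < n, i.e. dim R/p < n for every p ∈ Supp (M/N). *)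
Definition in_dim_lt (R : comPzRingType) (n : nat) (M : lmodType R) : Prop :=
  exists s : seq M, forall p : R -> Prop, is_prime_ideal p ->
    in_supp_quot s p -> ~ dim_quot_ge p n.

(* Main.v *)
Require Import Defs.
From HB Require Import structures.
From mathcomp Require Import all_boot all_order all_algebra.
From Stdlib Require Import Classical.
Import GRing.Theory.
Local Open Scope ring_scope.

Module Aux.
Set Implicit Arguments. Unset Strict Implicit.
Section Span.
Variables (R : comPzRingType) (M : lmodType R).
Local Notation mspan := (@mod_span R M).

Definition submod (P : M -> Prop) :=
  [/\ P 0, forall x y, P x -> P y -> P (x + y) & forall r x, P x -> P (r *: x)].

Fixpoint allIn (P : M -> Prop) (s : seq M) : Prop :=
  match s with [::] => True | a :: s => P a /\ allIn P s end.

Lemma mspan_nil x : mspan [::] x <-> x = 0.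
Proof. split; first by case=> c ->; rewrite big_ord0.
by move=> ->; exists (fun _ => 0); rewrite big_ord0. Qed.

Lemma mspan_cons a s x : mspan (a :: s) x <->
  exists c y, mspan s y /\ x = c *: a + y.
Proof.
split.
  case=> c ->; rewrite big_ord_recl /=.
  exists (c ord0), (\sum_(i < size s) c (lift ord0 i) *: s`_i); split => //.
  by exists (fun i => c (lift ord0 i)).
case=> c [y [[d ->] ->]].
exists (fun i : 'I_(size s).+1 => if unlift ord0 i is Some j then d j else c).
rewrite big_ord_recl /= unlift_none; congr (_ + _).
by apply: eq_bigr => i _; rewrite liftK.
Qed.

Lemma mspan_submod s : submod (mspan s).
Proof.
elim: s => [|a s [H0 HD HZ]].
  split; first by apply/mspan_nil.
    by move=> x y /mspan_nil -> /mspan_nil ->; apply/mspan_nil; rewrite addr0.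
  by move=> r x /mspan_nil ->; apply/mspan_nil; rewrite scaler0.
split.
- by apply/mspan_cons; exists 0, 0; split => //; rewrite scale0r addr0.
- move=> x y /mspan_cons [c [u [Hu ->]]] /mspan_cons [d [v [Hv ->]]].
  apply/mspan_cons; exists (c + d), (u + v); split; first exact: HD.
  by rewrite scalerDl addrACA.
- move=> r x /mspan_cons [c [u [Hu ->]]]; apply/mspan_cons.
  exists (r * c), (r *: u); split; first exact: HZ.
  by rewrite scalerDr scalerA.
Qed.

Lemma submodN P x : submod P -> P x -> P (- x).
Proof. by case=> _ _ HZ Hx; rewrite -scaleN1r; apply: HZ. Qed.

Lemma submodB P x y : submod P -> P x -> P y -> P (x - y).
Proof. move=> HP Hx Hy; case: (HP) => _ HD _; apply: HD => //; exact: submodN. Qed.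

Lemma mspan_min P s x : submod P -> allIn P s -> mspan s x -> P x.
Proof.
move=> [H0 HD HZ]; elim: s x => [|a s IH] x.
  by move=> _ /mspan_nil ->.
move=> [Pa Ps] /mspan_cons [c [y [Hy ->]]]; apply: HD; first exact: HZ.
exact: IH.
Qed.

Lemma mspan_cat s1 s2 x : mspan (s1 ++ s2) x <->
  exists y1 y2, mspan s1 y1 /\ mspan s2 y2 /\ x = y1 + y2.
Proof.
elim: s1 x => [|a s1 IH] x /=.
  split; first by move=> H; exists 0, x; split; [apply/mspan_nil|split=>//; rewrite add0r].
  by case=> y1 [y2 [/mspan_nil -> [H ->]]]; rewrite add0r.
split.
  move=> /mspan_cons [c [y [/IH [y1 [y2 [H1 [H2 ->]]]] ->]]].
  exists (c *: a + y1), y2; split; last by split=> //; rewrite addrA.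
  by apply/mspan_cons; exists c, y1.
case=> y1 [y2 [/mspan_cons [c [y [Hy ->]]] [H2 ->]]].
apply/mspan_cons; exists c, (y + y2); split; last by rewrite addrA.
by apply/IH; exists y, y2.
Qed.

Lemma allIn_mono (P Q : M -> Prop) s : (forall x, P x -> Q x) -> allIn P s -> allIn Q s.
Proof. by move=> H; elim: s => //= a s IH [Pa Ps]; split; [apply: H|apply: IH]. Qed.

Lemma allIn_cat P s1 s2 : allIn P s1 -> allIn P s2 -> allIn P (s1 ++ s2).
Proof. by elim: s1 => //= a s IH [Pa Ps] H2; split => //; apply: IH. Qed.

Lemma mspan_gen s : allIn (mspan s) s.
Proof.
elim: s => //= a s IH; split.
  by apply/mspan_cons; exists 1, 0; split; [by case: (mspan_submod s)|by rewrite scale1r addr0].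
apply: allIn_mono IH => x Hx; apply/mspan_cons; exists 0, x; split => //.
by rewrite scale0r add0r.
Qed.

End Span.

Lemma mspan_map (R : comPzRingType) (M N : lmodType R) (g : {linear M -> N}) s x :
  mod_span (map g s) x <-> exists y, mod_span s y /\ g y = x.
Proof.
elim: s x => [|a s IH] x /=.
  split; first by move=> /mspan_nil ->; exists 0; split; [apply/mspan_nil|rewrite raddf0].
  by case=> y [/mspan_nil -> <-]; apply/mspan_nil; rewrite raddf0.
split.
  move=> /mspan_cons [c [y [/IH [z [Hz <-]] ->]]].
  exists (c *: a + z); split; first by apply/mspan_cons; exists c, z.
  by rewrite linearD linearZ.
case=> y [/mspan_cons [c [z [Hz ->]]] <-].
apply/mspan_cons; exists c, (g z); split; first by apply/IH; exists z.
by rewrite linearD linearZ.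
Qed.

Lemma ideal_modE (R : comPzRingType) (s : seq R) x :
  ideal_span s x <-> @mod_span R (R^o)%type s x.
Proof. by []. Qed.
Lemma lift_ideal (R : comPzRingType) (M : lmodType R) (P : M -> Prop) (a : M) (s : seq M)
  (rs : seq R) : submod P ->
  @allIn R (R^o)%type (fun r => exists y, P y /\ mod_span s (y - r *: a)) rs ->
  exists ys, allIn P ys /\ forall r, ideal_span rs r ->
     exists z, mod_span ys z /\ mod_span s (z - r *: a).
Proof.
move=> HP; have [S0 SD SZ] := mspan_submod s.
elim: rs => [|r0 rs IH] /=.
  move=> _; exists [::]; split => // r /ideal_modE/mspan_nil ->.
  by exists 0; split; [apply/mspan_nil|rewrite scale0r subr0].
case=> [[y0 [Py0 Hy0]] /IH [ys [Pys Hys]]].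
exists (y0 :: ys); split => // r /ideal_modE/mspan_cons [c [r' [/ideal_modE/Hys [z [Hz Hz']] ->]]].
exists (c *: y0 + z); split; first by apply/mspan_cons; exists c, z.
have -> : c *: y0 + z - (c *: (r0 : R^o) + r') *: a = c *: (y0 - r0 *: a) + (z - r' *: a).
  rewrite scalerDl scalerBr; change ((c *: (r0:R^o)) : R) with (c * r0).
  rewrite -scalerA; set u := c *: (r0 *: a); set v := r' *: a.
  by rewrite opprD addrACA.
by apply: SD => //; apply: SZ.
Qed.

Lemma fg_sub (R : comPzRingType) (M : lmodType R) (hR : noetherian_ring R) (s : seq M) :
  forall P : M -> Prop, submod P -> (forall x, P x -> mod_span s x) ->
  exists s', allIn P s' /\ forall x, P x -> mod_span s' x.
Proof.
elim: s => [|a s IH] P HP Hs.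
  by exists [::]; split.
have [P0 PD PZ] := HP.
have [S0 SD SZ] := mspan_submod s.
pose I := fun r : R => exists y, P y /\ mod_span s (y - r *: a).
have II : is_ideal I.
  split.
  - by exists 0; split => //; rewrite scale0r subr0.
  - move=> r1 r2 [y1 [H1 H1']] [y2 [H2 H2']]; exists (y1 + y2); split; first exact: PD.
    rewrite scalerDl opprD addrACA; exact: SD.
  - move=> r x [y [H H']]; exists (r *: y); split; first exact: PZ.
    by rewrite -scalerA -scalerBr; apply: SZ.
have [rs Hrs] := hR I II.
have Irs : @allIn R (R^o)%type I rs.
  apply: allIn_mono (mspan_gen (rs : seq R^o)) => x Hx; apply/Hrs; exact/ideal_modE.
have [ys [Pys Hys]] := @lift_ideal R M P a s rs HP Irs.
pose P' := fun x => P x /\ mod_span s x.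
have HP' : submod P'.
  split; first by split.
  - by move=> x y [? ?] [? ?]; split; [apply: PD|apply: SD].
  - by move=> r x [? ?]; split; [apply: PZ|apply: SZ].
have [s' [Ps' Hs']] := IH P' HP' (fun x H => H.2).
exists (ys ++ s'); split.
  by apply: allIn_cat => //; apply: allIn_mono Ps' => x [].
move=> x Px; have /mspan_cons [c [y [Hy Ex]]] := Hs x Px.
have Ic : I c by exists x; split => //; rewrite Ex [c *: a + y]addrC addrK.
have [z [Hz Hz']] := Hys c (proj1 (Hrs c) Ic).
have Pz : P z := mspan_min HP Pys Hz.
apply/mspan_cat; exists z, (x - z); split => //; split; last by rewrite addrC subrK.
apply: Hs'; split; first exact: submodB.
have -> : x - z = y - (z - c *: a) by rewrite Ex opprB addrCA addrA. 
exact: (submodB (mspan_submod s)).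
Qed.
End Aux.
Import Aux.
Lemma lift_seq (R : comPzRingType) (M N : lmodType R) (g : M -> N) (P : N -> Prop) s :
  (forall z, P z -> exists y, g y = z) -> allIn P s -> exists t, map g t = s.
Proof.
move=> H; elim: s => [|a s IH] /=; first by exists [::].
case=> /H [y <-] /IH [t <-]; by exists (y :: t).
Qed.

Lemma allIn_True (R : comPzRingType) (N : lmodType R) (s : seq N) : allIn (fun _ => True) s.
Proof. by elim: s. Qed.

Theorem corollary2p13 (R : comPzRingType) (hR : noetherian_ring R) (n : nat) :
  forall (M' M M'' : lmodType R) (f : {linear M' -> M}) (g : {linear M -> M''}),
    injective f -> (forall z : M'', exists y : M, g y = z) ->
    (forall y : M, (exists x : M', f x = y) <-> g y = 0) ->
    (in_dim_lt n M <-> in_dim_lt n M' /\ in_dim_lt n M'').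
Proof.
move=> M' M M'' f g finj gsurj exact_.
split.
  case=> s Hs; split.
    pose Q := fun y : M => (exists x, f x = y) /\ mod_span s y.
    have HQ : submod Q.
      have [S0 SD SZ] := mspan_submod s.
      split.
      - by split => //; exists 0; rewrite linear0.
      - move=> x y [[x1 <-] H1] [[y1 <-] H2]; split; last exact: SD.
        by exists (x1 + y1); rewrite linearD.
      - move=> r x [[x1 <-] H1]; split; last exact: SZ.
        by exists (r *: x1); rewrite linearZ.
    have [s0 [Qs0 Hs0]] := @fg_sub R M hR s Q HQ (fun x H => H.2).
    have [s' Es'] := @lift_seq R M' M f Q s0 (fun z (H : Q z) => H.1) Qs0.
    exists s' => p pp [x' Hx']; apply: (Hs p pp); exists (f x') => t nt Ht.
    apply: (Hx' t nt).
    have : mod_span s0 (t *: f x') by apply: Hs0; split => //; exists (t *: x'); rewrite linearZ.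
    rewrite -Es' => /mspan_map [y [Hy Ey]].
    by rewrite -linearZ in Ey; rewrite -(finj _ _ Ey).
  exists (map g s) => p pp [z Hz]; apply: (Hs p pp).
  have [y Ey] := gsurj z; exists y => t nt Ht; apply: (Hz t nt).
  by apply/mspan_map; exists (t *: y); split => //; rewrite linearZ Ey.
case=> [[s1 H1] [s2 H2]].
have [t Et] := @lift_seq R M M'' g (fun _ => True) s2 (fun z _ => gsurj z) (@allIn_True R M'' s2).
exists (map f s1 ++ t) => p pp [x Hx].
have [h1 | h1] := classic (in_supp_quot s1 p); first exact: H1 p pp h1.
have [h2 | h2] := classic (in_supp_quot s2 p); first exact: H2 p pp h2.
exfalso.
have [t1 [nt1 Ht1]] : exists t1, ~ p t1 /\ mod_span s2 (t1 *: g x).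
  apply: NNPP => Hn; apply: h2; exists (g x) => t0 nt Hs; apply: Hn; exists t0; by split.
move: Ht1; rewrite -Et => /mspan_map [y [Hy Ey]].
have [x' Ex'] : exists x', f x' = t1 *: x - y.
  by apply/exact_; rewrite linearB linearZ Ey subrr.
have [t2 [nt2 Ht2]] : exists t2, ~ p t2 /\ mod_span s1 (t2 *: x').
  apply: NNPP => Hn; apply: h1; exists x' => t0 nt Hs; apply: Hn; exists t0; by split.
have [[_ _ _] _ pprime] := pp.
apply: (Hx (t2 * t1)).
  by move=> /pprime [].
apply/mspan_cat; exists (f (t2 *: x')), (t2 *: y); split.
  by apply/mspan_map; exists (t2 *: x').
split; first by case: (mspan_submod t) => _ _ HZ; apply: HZ.
by rewrite linearZ Ex' -scalerDr subrK scalerA.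
Qed.
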